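(* Let $r\ge 1$ and let $K$ be a pure $r$-dimensional simplicial complex on $n$ vertices with $\beta_r(K)=t$, where $1\le t\le n-r-1$. Then $$\mathfrak{q}_{r-1}(K)\le rn-r^2+t+1.$$
   Context: A (finite abstract) simplicial complex $K$ on a finite vertex set $V(K)$ is a family of subsets of $V(K)$ closed under taking subsets and containing every singleton; it is on $n$ vertices if $|V(K)|=n$. An $i$-face is a member of cardinality $i+1$; $S_i(K)$ is the set of $i$-faces; facets are inclusion-maximal faces; $K$ is pure if all facets have the same dimension. $\beta_r(K)=\dim_{\mathbb R}H_r(K;\mathbb R)$ is the $r$-th Betti number (real simplicial homology). For an $i$-face $F$, $d_K(F)$ is the number of $(i+1)$-faces containing $F$; two distinct $i$-faces are up-neighbors if their union is an $(i+1)$-face. The signless up Laplacian $Q_i^{\mathrm{up}}(K)$ is the operator on $\mathbb{R}^{S_i(K)}$ given by $(Q_i^{\mathrm{up}}(K)f)(F)=d_K(F)f(F)+\sum_{F'\text{ up-neighbor of }F}f(F')$, and $\mathfrak{q}_i(K)$ is its largest eigenvalue. *)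

(* Defs.v *)
From mathcomp Require Import all_boot all_order all_algebra.
From mathcomp Require Import reals.
Set Implicit Arguments. Unset Strict Implicit. Unset Printing Implicit Defensive.
Import Order.TTheory GRing.Theory Num.Theory.
Local Open Scope ring_scope.

(* A finite abstract simplicial complex with vertex set the finite type T
   (so it is "on n vertices" with n = #|T|). *)
Definition simplicial_complex (T : finType) (K : {set {set T}}) : Prop :=
  (forall F G : {set T}, F \in K -> G \subset F -> G \in K) /\
  (forall v : T, [set v] \in K).

Definition faces (T : finType) (K : {set {set T}}) (i : nat) : {set {set T}} :=
  [set F in K | #|F| == i.+1].

Definition is_facet (T : finType) (K : {set {set T}}) (F : {set T}) : bool :=
  (F \in K) && [forall G : {set T}, ((G \in K) && (F \subset G)) ==> (G == F)].

Definition pure_dim (T : finType) (K : {set {set T}}) (r : nat) : Prop :=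
  (exists F, is_facet K F) /\ (forall F, is_facet K F -> #|F| = r.+1).

Definition fval (T : finType) (K : {set {set T}}) (i : nat)
  (j : 'I_#|faces K i|) : {set T} := enum_val j.

(* incidence sign [F : G] for G = F \ {v}, with vertices ordered by enum_rank:
   (-1)^(number of vertices of F below v). Zero if G is not a facet of F. *)
Definition incidence (R : nzRingType) (T : finType) (F G : {set T}) : R :=
  if (G \subset F) && (#|F :\: G| == 1%N) then
    \sum_(v in F :\: G) (-1) ^+ #|[set u in F | (enum_rank u < enum_rank v)%N]|
  else 0.

(* boundary matrix of d_{i+1} : C_{i+1}(K;R) -> C_i(K;R), rows indexed by
   (i+1)-faces, columns by i-faces (row-vector convention: c |-> c *m bd). *)
Definition bd (R : nzRingType) (T : finType) (K : {set {set T}}) (i : nat) :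
  'M[R]_(#|faces K i.+1|, #|faces K i|) :=
  \matrix_(a, b) incidence R (fval a) (fval b).

(* dim Z_i = dim ker d_i  (d_0 = 0) *)
Definition dim_cycles (R : fieldType) (T : finType) (K : {set {set T}}) (i : nat)
  : nat :=
  if i is j.+1 then \rank (kermx (bd R K j)) else #|faces K 0|.

(* beta_i(K) = dim H_i(K;R) = dim Z_i - dim B_i, with B_i = im d_{i+1} *)
Definition betti (R : fieldType) (T : finType) (K : {set {set T}}) (i : nat)
  : nat :=
  (dim_cycles R K i - \rank (bd R K i))%N.

Definition updeg (T : finType) (K : {set {set T}}) (F : {set T}) : nat :=
  #|[set G in K | (F \subset G) && (#|G| == #|F|.+1)]|.

Definition up_neighbors (T : finType) (K : {set {set T}}) (F F' : {set T})
  : bool :=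
  (F != F') && (F :|: F' \in K) && (#|F :|: F'| == #|F|.+1).

Definition Qup (R : nzRingType) (T : finType) (K : {set {set T}}) (i : nat) :
  'M[R]_#|faces K i| :=
  \matrix_(a, b)
    if a == b then (updeg K (fval a))%:R
    else if up_neighbors K (fval a) (fval b) then 1 else 0.

(* Main.v *)
Require Import Defs.
From mathcomp Require Import all_boot all_order all_algebra.
From mathcomp Require Import reals.
From mathcomp Require Import zify ring lra.
Set Implicit Arguments. Unset Strict Implicit. Unset Printing Implicit Defensive.
Import Order.TTheory GRing.Theory Num.Theory.


Section Inc.
Local Open Scope ring_scope.
Variables (R : nzRingType) (T : finType).

Definition alpha (P : {set T}) (x : T) : nat :=
  #|[set u in P | (enum_rank u < enum_rank x)%N]|.

Lemma incidence_one (F H : {set T}) x :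
  H \subset F -> F :\: H = [set x] ->
  incidence R F H = (-1) ^+ alpha F x.
Proof.
move=> sHF eFH; rewrite /incidence sHF eFH cards1 /= big_set1 //.
Qed.

Lemma incidence_D1 (P : {set T}) x : x \in P ->
  incidence R P (P :\ x) = (-1) ^+ alpha P x.
Proof.
move=> xP; apply: incidence_one; first exact: subD1set.
apply/setP=> u; rewrite !inE; case: (eqVneq u x) => [->|] /=; rewrite ?xP //.
by case: (u \in P).
Qed.

Lemma incidence_nz (F H : {set T}) : incidence R F H != 0 ->
  exists2 x, x \in F & H = F :\ x.
Proof.
rewrite /incidence; case: ifP; last by rewrite eqxx.
case/andP=> sHF /cards1P [x ex] _; exists x.
  have: x \in F :\: H by rewrite ex set11.
  by case/setDP.
apply/setP=> u; rewrite !inE; have := congr1 (fun A : {set T} => u \in A) ex.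
rewrite /= !inE; case: (eqVneq u x) => [->|_] /=.
  by move/andP=> [/negbTE -> _].
case uH: (u \in H) => /=; first by rewrite (subsetP sHF).
by move=> ->.
Qed.


Lemma alphaD1_lt (P : {set T}) a b : a \in P -> (enum_rank a < enum_rank b)%N ->
  alpha (P :\ a) b = (alpha P b).-1.
Proof.
move=> aP lt; rewrite /alpha (cardsD1 a [set u in P | (enum_rank u < enum_rank b)%N]).
rewrite !inE aP lt add1n /=; apply: eq_card => u; rewrite !inE.
by case: (u == a); rewrite ?andbF.
Qed.

Lemma alphaD1_gt (P : {set T}) a b : (enum_rank a < enum_rank b)%N ->
  alpha (P :\ b) a = alpha P a.
Proof.
move=> lt; rewrite /alpha; apply: eq_card => u; rewrite !inE.
case: (eqVneq u b) => [->|] //=; rewrite ltnNge (ltnW lt) /= andbF //.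
Qed.

Lemma dd0 (P G : {set T}) (S : {set {set T}}) :
  (forall x, x \in P -> P :\ x \in S) ->
  \sum_(s in S) incidence R P s * incidence R s G = 0.
Proof.
move=> HS.
case: (pickP [pred ab : T * T | [&& ab.1 \in P, ab.2 \in P, ab.1 != ab.2 &
   G == P :\ ab.1 :\ ab.2]]) => [[a b] /= /and4P [aP bP nab /eqP eG] | none].
  have key : forall s, s \in S -> s != P :\ a -> s != P :\ b ->
      incidence R P s * incidence R s G = 0.
    move=> s _ nsa nsb.
    case: (eqVneq (incidence R P s) 0) => [->|/incidence_nz [x xP esx]]; first by rewrite mul0r.
    case: (eqVneq (incidence R s G) 0) => [->|/incidence_nz [y yP eG2]]; first by rewrite mulr0.
    have : x \notin G by rewrite eG2 esx !inE eqxx andbF.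
    rewrite eG !inE xP andbT negb_and !negbK.
    by case/orP=> /eqP ex; [move: nsb | move: nsa]; rewrite esx ex eqxx.
  have nab' : P :\ b != P :\ a.
    apply/negP=> /eqP e; have := congr1 (fun A : {set T} => a \in A) e.
    by rewrite /= !inE eqxx /= aP nab.
  rewrite (bigD1 (P :\ a)) ?HS //= (bigD1 (P :\ b)) /= ?HS ?nab' //.
  rewrite big1 ?addr0; last by move=> s /andP [/andP [sS nsa] nsb]; apply: key.
  have eGb : G = P :\ b :\ a.
    by rewrite eG; apply/setP=> u; rewrite !inE; case: (u == a); case: (u == b).
  have aPb : a \in P :\ b by rewrite !inE aP andbT.
  have bPa : b \in P :\ a by rewrite !inE bP eq_sym nab.
  rewrite [X in incidence R (P :\ a) X]eG [X in incidence R (P :\ b) X]eGb !incidence_D1 //.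
  wlog lt : a b aP bP nab aPb bPa {eG eGb nab' key} / (enum_rank a < enum_rank b)%N.
    move=> Hw; case: (ltngtP (enum_rank a) (enum_rank b)) => [lt|lt|eq].
    - exact: Hw.
    - by rewrite addrC; apply: Hw; rewrite // eq_sym.
    - by move/eqP: nab; case; apply: enum_rank_inj; apply: val_inj.
  rewrite alphaD1_lt // alphaD1_gt //.
  have : (0 < alpha P b)%N.
    by rewrite /alpha card_gt0; apply/set0Pn; exists a; rewrite !inE aP lt.
  case: (alpha P b) => // c _ /=.
  by rewrite exprS mulN1r mulNr -!exprD addnC subrr.
apply: big1 => s _.
case: (eqVneq (incidence R P s) 0) => [->|/incidence_nz [x xP esx]]; first by rewrite mul0r.
case: (eqVneq (incidence R s G) 0) => [->|/incidence_nz [y yP eG2]]; first by rewrite mulr0.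
have := none (x, y); rewrite /= xP eG2 esx eqxx andbT.
move: yP; rewrite esx !inE => /andP [nyx yP]; rewrite yP eq_sym nyx //.
Qed.

End Inc.



Section Hom.
Local Open Scope ring_scope.
Variables (R : fieldType) (T : finType) (K : {set {set T}}) (k : nat).
Variable sig : {set T}.
Hypothesis sigF : sig \in faces K k.+1.

Definition Wset : {set T} :=
  [set w | (w \notin sig) && [forall v in sig, (sig :\ v :|: [set w]) \in K]].

Lemma sig_card : #|sig| = k.+2.
Proof. by move: sigF; rewrite inE => /andP [_ /eqP]. Qed.

Lemma Wface w x : w \in Wset -> x \in sig :|: [set w] ->
  (sig :|: [set w]) :\ x \in faces K k.+1.
Proof.
rewrite inE => /andP [wn /forallP Hw] xP.
have e1 : forall y, y \notin sig -> (sig :|: [set y]) :\ y = sig.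
  move=> y yn; apply/setP=> u; rewrite !inE.
  by case: (eqVneq u y) => [->|] /=; rewrite ?(negbTE yn) ?orbF.
case: (eqVneq x w) => [->|nxw].
  by rewrite e1.
have xs : x \in sig by move: xP; rewrite !inE (negbTE nxw) orbF.
have e2 : (sig :|: [set w]) :\ x = sig :\ x :|: [set w].
  apply/setP=> u; rewrite !inE; case: (eqVneq u w) => [->|] /=.
    by rewrite eq_sym nxw orbT.
  by rewrite !orbF.
rewrite e2 inE; move: (Hw x); rewrite xs /= => -> /=.
rewrite setUC cardsU1 !inE (negbTE wn) andbF /= add1n.
by move: (cardsD1 x sig); rewrite xs sig_card add1n => -[<-].
Qed.

Lemma sum_enum_val (V : nmodType) (S : {set {set T}}) (F : {set T} -> V) :
  \sum_(j < #|S|) F (enum_val j) = \sum_(s in S) F s.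
Proof. by rewrite [RHS]big_enum_val. Qed.

Definition Cmx : 'M[R]_(#|Wset|, #|faces K k.+1|) :=
  \matrix_(i, j) incidence R (sig :|: [set enum_val i]) (fval j).

Lemma Cmx_ker : Cmx *m bd R K k = 0.
Proof.
apply/matrixP=> i b; rewrite !mxE.
under eq_bigr do rewrite !mxE.
rewrite /fval (sum_enum_val (faces K k.+1)
  (fun s => incidence R (sig :|: [set enum_val i]) s * incidence R s (enum_val b))).
apply: dd0 => x xP; apply: Wface => //; exact: enum_valP.
Qed.

Lemma Cmx_free : row_free Cmx.
Proof.
rewrite -kermx_eq0; apply/rowV0P => u /sub_kermxP uC.
apply/rowP=> i; rewrite mxE.
have [v0 v0s] : exists v0, v0 \in sig.
  by apply/set0Pn; rewrite -card_gt0 sig_card.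
set w := enum_val i.
have wW : w \in Wset by exact: enum_valP.
have wn : w \notin sig by move: wW; rewrite inE => /andP [].
set tau := (sig :|: [set w]) :\ v0.
have tF : tau \in faces K k.+1 by apply: Wface; rewrite // !inE v0s.
have := congr1 (fun M : 'rV[R]_(#|faces K k.+1|) => M 0 (enum_rank_in tF tau)) uC.
rewrite !mxE (bigD1 i) //= big1 ?addr0.
  rewrite !mxE /fval (enum_rankK_in tF tF) -/w /tau incidence_D1 ?inE ?v0s //.
  by move/eqP; rewrite mulf_eq0 signr_eq0 orbF => /eqP.
move=> i' ni; rewrite !mxE /fval (enum_rankK_in tF tF) /incidence.
case: ifP; last by rewrite mulr0.
case/andP=> sub _; exfalso.
have : w \in sig :|: [set enum_val i'].
  apply: (subsetP sub); rewrite /tau !inE eqxx orbT andbT.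
  by apply: contraNneq wn => ->.
rewrite !inE (negbTE wn) /=.
move/eqP => e; move: ni; rewrite /w in e.
by move/(enum_val_inj) : e => ->; rewrite eqxx.
Qed.

Lemma W_le_rank : (#|Wset| <= \rank (kermx (bd R K k)))%N.
Proof.
have := Cmx_free; rewrite /row_free => /eqP <-.
by apply: mxrankS; apply/sub_kermxP; exact: Cmx_ker.
Qed.

End Hom.



Section Comb.
Variables (T : finType) (K : {set {set T}}) (k : nat).
Variable sig : {set T}.
Hypothesis sigF : sig \in faces K k.+1.

Definition Ns (s : {set T}) : nat :=
  #|[set a : 'I_#|faces K k| | (fval a \subset sig) && (fval a \subset s)]|.

Lemma fval_card (a : 'I_#|faces K k|) : #|fval a| = k.+1.
Proof. by have := enum_valP a; rewrite /fval inE => /andP [_ /eqP]. Qed.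

Lemma Ns_draws s : Ns s <= 'C(#|sig :&: s|, k.+1).
Proof.
rewrite /Ns -cards_draws -(card_imset _ (@enum_val_inj _ (mem (faces K k)))).
apply: subset_leq_card; apply/subsetP => A /imsetP [a]; rewrite inE => /andP [h1 h2] ->.
by rewrite inE subsetI h1 h2 /= -/(fval a) fval_card.
Qed.

Lemma Ns_bound s : s \in faces K k.+1 ->
  Ns s <= (if s == sig then k.+2 else (#|sig :&: s| == k.+1) : nat).
Proof.
move=> sF; apply: leq_trans (Ns_draws s) _.
case: (eqVneq s sig) => [->|ns]; first by rewrite setIid (sig_card sigF) binSn.
have cs : #|s| = k.+2 by move: sF; rewrite inE => /andP [_ /eqP].
have : #|sig :&: s| <= k.+1.
  rewrite leqNgt; apply/negP => lt.
  have e1 : sig :&: s == s by rewrite eqEcard subsetIr cs.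
  have e2 : sig :&: s == sig by rewrite eqEcard subsetIl (sig_card sigF).
  by move: ns; rewrite -(eqP e1) (eqP e2) eqxx.
rewrite leq_eqVlt => /orP [/eqP ->|lt]; first by rewrite binn eqxx.
by rewrite bin_small.
Qed.

Definition Xw (w : T) : {set {set T}} :=
  [set s in faces K k.+1 | [&& s != sig, #|sig :&: s| == k.+1 & w \in s]].

Lemma Xw_bound w : w \notin sig -> #|Xw w| <= k.+1 + (w \in Wset K sig).
Proof.
move=> wn.
have rec : {in Xw w, forall s, (sig :&: s) :|: [set w] = s}.
  move=> s; rewrite inE => /andP [sF /and3P [_ /eqP cI ws]].
  have cs : #|s| = k.+2 by move: sF; rewrite inE => /andP [_ /eqP].
  apply/eqP; rewrite eqEcard subUset subsetIr sub1set ws /= cs.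
  by rewrite setUC cardsU1 cI !inE (negbTE wn).
have inj : {in Xw w &, injective (fun s => sig :&: s)}.
  by move=> s1 s2 h1 h2 e; rewrite -(rec _ h1) -(rec _ h2) /= e.
rewrite -(card_in_imset inj).
set D := [set A : {set T} | (A \subset sig) && (#|A| == k.+1)].
have cD : #|D| = k.+2 by rewrite /D cards_draws (sig_card sigF) binSn.
have sub : [set sig :&: s | s in Xw w] \subset D.
  apply/subsetP=> A /imsetP [s h ->]; move: h; rewrite !inE => /andP [_ /and3P [_ -> _]].
  by rewrite subsetIl.
case wW: (w \in Wset K sig); first by rewrite addn1 -cD subset_leq_card.
move: wW; rewrite inE wn /= => /negbT; rewrite negb_forall => /existsP [v].
rewrite negb_imply => /andP [vs nK].
have vD : sig :\ v \in D.
  rewrite inE subD1set /=; move: (cardsD1 v sig); rewrite vs (sig_card sigF) add1n.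
  by case=> <-.
have : [set sig :&: s | s in Xw w] \subset D :\ (sig :\ v).
  apply/subsetP=> A Ain; rewrite in_setD1 (subsetP sub) // andbT.
  apply/negP=> /eqP eA; move: Ain => /imsetP [s h eAs].
  have := rec _ h; rewrite -eAs eA => es.
  move: h nK; rewrite inE es => /and4P [].
  by rewrite inE => /andP [-> _].
move/subset_leq_card; move: (cardsD1 (sig :\ v) D); rewrite vD cD add1n addn0.
by case=> <-.
Qed.


Lemma sumNs_bound : \sum_(s in faces K k.+1) Ns s + (k.+1)^2
   <= k.+1 * #|T| + #|Wset K sig| + 1.
Proof.
set F := faces K k.+1; set W := Wset K sig.
pose b s := (#|sig :&: s| == k.+1).
have h1 : \sum_(s in F) Ns s <= k.+2 + \sum_(s in F | s != sig) (b s : nat).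
  have h0 : \sum_(s in F) Ns s <= \sum_(s in F) (if s == sig then k.+2 else (b s : nat)).
    by apply: leq_sum => s sF; exact: Ns_bound.
  apply: leq_trans h0 _.
  rewrite (bigD1 sig) //= eqxx leq_add2l; apply: eq_leq; apply: eq_bigr => s /andP [_ ns].
  by rewrite (negbTE ns).
have h2 : \sum_(s in F | s != sig) (b s : nat) <=
    \sum_(s in F | s != sig) \sum_(w in ~: sig) ((b s && (w \in s)) : nat).
  apply: leq_sum => s /andP [sF ns]; case bs: (b s) => //=.
  have cs : #|s| = k.+2 by move: sF; rewrite inE => /andP [_ /eqP].
  have [w ws] : exists w, w \in s :\: sig.
    apply/set0Pn; rewrite -card_gt0; move: (cardsID sig s).
    rewrite setIC (eqP bs) cs => e; lia.
  move: ws; rewrite inE => /andP [wn ws].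
  by rewrite (bigD1 w) ?inE //= ws.
rewrite exchange_big /= in h2.
have h3 : forall w, \sum_(s in F | s != sig) ((b s && (w \in s)) : nat) = #|Xw w|.
  move=> w; rewrite -sum1dep_card.
  rewrite [RHS]big_mkcondr [LHS]big_mkcondr; apply: eq_bigr => s _.
  by rewrite /b; case: (s != sig); case: (#|sig :&: s| == k.+1); case: (w \in s).
have h4 : \sum_(w in ~: sig) #|Xw w| <= \sum_(w in ~: sig) (k.+1 + (w \in W)).
  by apply: leq_sum => w; rewrite inE => wn; exact: Xw_bound.
rewrite big_split /= sum_nat_const in h4.
have h5 : \sum_(w in ~: sig) ((w \in W) : nat) <= #|W|.
  rewrite -big_mkcondr /= sum1dep_card.
  by apply: subset_leq_card; apply/subsetP => w; rewrite inE => /andP [].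
have {}h2 : \sum_(s in F | s != sig) (b s : nat) <= \sum_(w in ~: sig) #|Xw w|.
  by apply: leq_trans h2 _; apply: eq_leq; apply: eq_bigr => w _; exact: h3.
have cC := cardsC sig; rewrite (sig_card sigF) in cC.
move: h1 h2 h4 h5; set c := #|~: sig|; set S := \sum_(s in F) Ns s.
set S1 := \sum_(s in F | s != sig) (b s : nat); set S2 := \sum_(w in ~: sig) #|Xw w|.
set S3 := \sum_(w in ~: sig) ((w \in W) : nat).
rewrite -cC; nia.
Qed.

End Comb.



Section Ana.
Local Open Scope ring_scope.
Variables (R : realFieldType) (T : finType) (K : {set {set T}}) (k : nat).

Local Notation F := (faces K k.+1).

Lemma Q_entry (a b : 'I_#|faces K k|) :
  Qup R K k a b = (#|[set s in F | (fval b \subset s) && (fval a \subset s)]|)%:R.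
Proof.
rewrite mxE; case: (eqVneq a b) => [->|nab].
  rewrite /updeg fval_card; congr (_%:R); apply: eq_card => s; rewrite !inE andbb.
  by case: (s \in K); case: (fval b \subset s); case: (#|s| == k.+2).
have nF : fval a != fval b by apply: contra nab => /eqP /enum_val_inj ->.
set U := fval a :|: fval b.
have e : [set s in F | (fval b \subset s) && (fval a \subset s)] = [set s in F | U \subset s].
  apply/setP => s; rewrite !inE subUset.
  by case: (fval a \subset s); case: (fval b \subset s); rewrite ?andbF.
rewrite e /up_neighbors nF /= -/U fval_card.
have cU : (k.+2 <= #|U|)%N.
  rewrite ltnNge; apply/negP => le.
  have ea : fval a == U by rewrite eqEcard subsetUl fval_card.
  have eb : fval b == U by rewrite eqEcard subsetUr fval_card.
  by move: nF; rewrite (eqP ea) (eqP eb) eqxx.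
case: ifP => [/andP [UK /eqP cU2] | nU].
  have -> : [set s in F | U \subset s] = [set U].
    apply/setP => s; rewrite !inE; apply/idP/idP.
      case/andP => /andP [_ /eqP cs] sub; rewrite eq_sym eqEcard sub cs cU2 ltnSn.
      by [].
    by move/eqP ->; rewrite UK cU2 eqxx subxx.
  by rewrite (cards1 U).
have -> : [set s in F | U \subset s] = set0.
  apply/setP => s; rewrite !inE; apply/negP => /andP [/andP [sK /eqP cs] sub].
  have eU : U == s by rewrite eqEcard sub cs.
  by move: nU; rewrite (eqP eU) sK cs eqxx.
by rewrite cards0.
Qed.


Definition yv (v : 'rV[R]_#|faces K k|) (s : {set T}) : R :=
  \sum_(a | fval a \subset s) v 0 a.

Lemma Eq1 (v : 'rV[R]_#|faces K k|) q : v *m Qup R K k = q *: v ->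
  forall b, q * v 0 b = \sum_(s in F | fval b \subset s) yv v s.
Proof.
move=> Hv b; have := congr1 (fun M : 'rV[R]_#|faces K k| => M 0 b) Hv.
rewrite !mxE => <-.
under eq_bigr do rewrite Q_entry.
transitivity (\sum_(a < #|faces K k|) \sum_(s in F | fval b \subset s)
     (if fval a \subset s then v 0 a else 0)).
  apply: eq_bigr => a _.
  rewrite -sumr_const mulr_sumr [LHS]big_mkcond [RHS]big_mkcond.
  apply: eq_bigr => s _; rewrite !inE.
  by case: (s \in K); case: (#|s| == k.+2); case: (fval b \subset s);
     case: (fval a \subset s); rewrite /= ?mulr1.
rewrite exchange_big; apply: eq_bigr => s _.
by rewrite /yv [RHS]big_mkcond.
Qed.

Lemma swap_count (I J : finType) (P : pred I) (S : pred J) (Q : I -> J -> bool) :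
  (\sum_(i | P i) \sum_(j | S j && Q i j) 1 =
   \sum_(j | S j) \sum_(i | P i && Q i j) 1)%N.
Proof.
rewrite (exchange_big_dep S) /=; last by move=> i j _ /andP [].
apply: eq_bigr => j Sj; apply: eq_bigl => i; by rewrite Sj.
Qed.

Lemma ana_bound (v : 'rV[R]_#|faces K k|) q sig :
  v *m Qup R K k = q *: v -> v != 0 -> sig \in F ->
  (forall s, s \in F -> `|yv v s| <= `|yv v sig|) ->
  q = 0 \/ q <= (\sum_(s in F) Ns K k sig s)%:R.
Proof.
move=> Hv vnz sF Hmax.
case: (eqVneq (yv v sig) 0) => [y0|ynz].
  left; have all0 : forall s, s \in F -> yv v s = 0.
    by move=> s /Hmax; rewrite y0 normr0 normr_le0 => /eqP.
  have [b nb] := rV0Pn _ vnz.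
  have := Eq1 Hv b; rewrite big1 => [/eqP|s /andP [sF' _]]; last exact: all0.
  by rewrite mulf_eq0 (negbTE nb) orbF => /eqP.
right.
have key : q * yv v sig = \sum_(a : 'I_#|faces K k| | fval a \subset sig)
     \sum_(s in F | fval a \subset s) yv v s.
  rewrite {1}/yv mulr_sumr.
  by apply: eq_bigr => a _; exact: Eq1.
have eN : ((\sum_(s in F) Ns K k sig s)%:R : R) =
    \sum_(a : 'I_#|faces K k| | fval a \subset sig) \sum_(s in F | fval a \subset s) 1.
  have -> : (\sum_(s in F) Ns K k sig s =
      \sum_(s in F) \sum_(a : 'I_#|faces K k| | (fval a \subset sig) && (fval a \subset s)) 1)%N.
    by apply: eq_bigr => s _; rewrite /Ns sum1dep_card.
  rewrite -(swap_count (fun a : 'I_#|faces K k| => fval a \subset sig)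
     (fun s => s \in F) (fun a s => fval a \subset s)).
  rewrite natr_sum; apply: eq_bigr => a _; rewrite natr_sum.
  by apply: eq_bigr.
have h : `|q| * `|yv v sig| <= (\sum_(s in F) Ns K k sig s)%:R * `|yv v sig|.
  rewrite -normrM key eN mulr_suml; apply: le_trans (ler_norm_sum _ _ _) _.
  apply: ler_sum => a _; rewrite mulr_suml.
  apply: le_trans (ler_norm_sum _ _ _) _.
  by apply: ler_sum => s /andP [sF' _]; rewrite mul1r; exact: Hmax.
rewrite ler_pM2r ?normr_gt0 // in h.
exact: le_trans (ler_norm q) h.
Qed.

End Ana.


Unset Implicit Arguments.
Local Open Scope ring_scope.


Theorem mainTheorem11 (R : realType) (T : finType) (K : {set {set T}})
  (r t : nat) :
  simplicial_complex K -> pure_dim K r -> (1 <= r)%N ->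
  betti R K r = t -> (1 <= t)%N -> (t <= #|T| - r - 1)%N ->
  forall q : R, eigenvalue (Qup R K r.-1) q ->
    q <= (r * #|T|)%:R - (r ^ 2)%:R + t%:R + 1.
Proof.
move=> _ Hpure; case: r Hpure => [|k] //= Hpure _ Hbetti _ _ q Hq.
case: Hpure => [[s0 fs0] Hcard].
have cs0 := Hcard _ fs0.
have s0K : s0 \in K by move: fs0 => /andP [].
have s0F : s0 \in faces K k.+1 by rewrite inE s0K cs0 eqxx.
have bnd : forall G, G \in K -> (#|G| <= k.+2)%N.
  move=> G GK.
  case: (@arg_maxnP _ G (fun H => (H \in K) && (G \subset H)) (fun H => #|H|)).
    by rewrite GK subxx.
  move=> H /andP [HK GH] Hm.
  have fH : is_facet K H.
    rewrite /is_facet HK /=; apply/forallP => H'; apply/implyP => /andP [H'K HH'].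
    rewrite eq_sym eqEcard HH' /=; apply: Hm; rewrite H'K /=.
    exact: subset_trans GH HH'.
  by rewrite -(Hcard _ fH); apply: subset_leq_card.
have c0 : #|faces K k.+2| = 0%N.
  apply/eqP; rewrite cards_eq0; apply/eqP/setP => G; rewrite !inE.
  apply/negP => /andP [GK /eqP cG]; have := bnd _ GK; by rewrite cG ltnn.
have r0 : (\rank (bd R K k.+1) <= 0)%N := leq_trans (rank_leq_row _) (eq_leq c0).
have et : t = \rank (kermx (bd R K k)).
  by rewrite -Hbetti /betti /=; move: r0; rewrite leqn0 => /eqP ->; rewrite subn0.
have nge : (k.+2 <= #|T|)%N by rewrite -cs0 max_card.
case/eigenvalueP: Hq => v Hv vnz.
have [sig sigF Hm] : exists2 sig, sig \in faces K k.+1 &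
    forall s, s \in faces K k.+1 -> `|yv v s| <= `|yv v sig|.
  case: (@arg_maxP _ _ _ s0 (fun s => s \in faces K k.+1) (fun s => `|yv v s|) s0F).
  by move=> s sF H; exists s.
have hW := W_le_rank R sigF; rewrite -et in hW.
have hS := sumNs_bound sigF.
have hsq : ((k.+1)^2 <= k.+1 * #|T|)%N by nia.
have hsqR : ((k.+1)^2)%:R <= (k.+1 * #|T|)%:R :> R by rewrite ler_nat.
have t0 : 0 <= t%:R :> R by apply: ler0n.
case: (ana_bound Hv vnz sigF Hm) => [-> | hq].
  lra.
set S := (\sum_(s in faces K k.+1) Ns K k sig s)%N in hS hq.
have hS' : (S + (k.+1)^2 <= k.+1 * #|T| + t + 1)%N by lia.
have : ((S + (k.+1)^2)%:R : R) <= (k.+1 * #|T| + t + 1)%:R by rewrite ler_nat.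
rewrite !natrD mulr1n => h.
lra.
Qed.
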